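(* There exists a $2$-adic fractal string $\mathcal{CS}_2\subseteq\mathbb{Z}_2$ of Minkowski--Bouligand dimension $D=0$ and with oscillatory period $\mathbf{p}=\frac{2\pi}{\log 2}$; that is, its geometric zeta function extends meromorphically to $\mathbb{C}$, its set of poles (complex dimensions) is exactly $\{\frac{2\pi i n}{\log 2}: n\in\mathbb{Z}\}$, and $0$ is the abscissa of convergence of the series defining the geometric zeta function.
   Context: Let $\mathbb{Z}_2$ be the ring of $2$-adic integers with $|2|_2=\frac12$. A $2$-adic fractal string $\mathcal{L}$ in $\mathbb{Z}_2$ is a countable disjoint union of balls $a+2^n\mathbb{Z}_2$ ($a\in\mathbb{Z}_2$, $n\ge1$) contained in $\mathbb{Z}_2$; such a ball has length $2^{-n}$, and $\mathcal{L}$ is encoded by its sequence of lengths $l_j$ counted with multiplicity. Its geometric zeta function is $\zeta_{\mathcal{L}}(s)=\sum_j l_j^s$ for $\Re(s)$ large, meromorphically continued to $\mathbb{C}$ when possible; the complex dimensions are the poles of this continuation; the Minkowski--Bouligand dimension $D$ is the abscissa of convergence of $\sum_j l_j^s$; the oscillatory period is $\mathbf{p}>0$ if the set of complex dimensions is exactly $\{D+in\mathbf{p}:n\in\mathbb{Z}\}$. *)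

(* Defs.v *)
From Stdlib Require Import Reals Lra Lia ZArith.
From Coquelicot Require Import Coquelicot.
Open Scope R_scope.

(** 2-adic integers, as a set: Z_2 is identified with the set of 2-adic digit
    expansions x = sum_k x_k 2^k, x_k in {0,1}. *)
Definition Z2 := nat -> bool.

(** The ball a + 2^n Z_2 : all x whose first n 2-adic digits agree with those of a. *)
Definition ball2 (a : Z2) (n : nat) : Z2 -> Prop :=
  fun x => forall k, (k < n)%nat -> x k = a k.

(** A 2-adic fractal string: a countable family of balls a_j + 2^{n_j} Z_2
    (n_j >= 1), indexed by j in nat (None = no ball at index j, which allows
    finite families), pairwise disjoint. *)
Record frac_string2 := {
  fs_ball : nat -> option (Z2 * nat);
  fs_radius_ge1 : forall j a n, fs_ball j = Some (a, n) -> (1 <= n)%nat;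
  fs_disjoint : forall i j a m b n, i <> j ->
      fs_ball i = Some (a, m) -> fs_ball j = Some (b, n) ->
      forall x, ~ (ball2 a m x /\ ball2 b n x)
}.

Definition cexp (z : C) : C :=
  (exp (Re z) * cos (Im z), exp (Re z) * sin (Im z)).

(** l^s for the length l = 2^{-n} of a ball and s complex: exp(-s n log 2). *)
Definition cpow_len (n : nat) (s : C) : C :=
  cexp (Cmult (RtoC (- (INR n * ln 2))) s).

Definition zeta_term (L : frac_string2) (s : C) (j : nat) : C :=
  match fs_ball L j with
  | None => RtoC 0
  | Some (_, n) => cpow_len n s
  end.

Definition zeta_term_real (L : frac_string2) (sigma : R) (j : nat) : R :=
  match fs_ball L j with
  | None => 0
  | Some (_, n) => exp (- (INR n * ln 2) * sigma)
  end.

Definition abscissa (L : frac_string2) (D : R) : Prop :=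
  (forall sigma, D < sigma -> ex_series (zeta_term_real L sigma)) /\
  (forall sigma, sigma < D -> ~ ex_series (zeta_term_real L sigma)).

Definition holo_at (f : C -> C) (z : C) : Prop :=
  @ex_derive C_AbsRing C_NormedModule f z.

Definition is_pole (f : C -> C) (p : C) : Prop :=
  forall M : R, exists delta : R, 0 < delta /\
    forall z : C, 0 < Cmod (Cminus z p) < delta -> M < Cmod (f z).

Definition meromorphic_with_poles (f : C -> C) (P : C -> Prop) : Prop :=
  (forall z : C, exists delta : R, 0 < delta /\
     forall w : C, P w -> 0 < Cmod (Cminus w z) < delta -> False) /\
  (forall z : C, ~ P z -> holo_at f z) /\
  (forall p : C, P p -> is_pole f p).

Definition complex_dimensions (L : frac_string2) (P : C -> Prop) : Prop :=
  exists f : C -> C,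
    (exists sigma0 : R, forall s : C, sigma0 < Re s ->
        is_series (zeta_term L s) (f s)) /\
    meromorphic_with_poles f P.

Definition oscillatory_period (L : frac_string2) (D p : R) : Prop :=
  0 < p /\
  complex_dimensions L (fun z => exists n : Z, z = (D, IZR n * p)).

(* Main.v *)
Require Import Defs.
From Stdlib Require Import Reals ZArith.
From Coquelicot Require Import Coquelicot.
From Stdlib Require Import Lra Lia Psatz Classical_Prop.
Open Scope R_scope.

Lemma PI_gt1 : 1 < PI.
Proof. generalize PI2_1; lra. Qed.

Lemma abs_le (a c : R) : Rabs a <= c -> -c <= a <= c.
Proof. unfold Rabs; destruct Rcase_abs; lra. Qed.

Lemma abs_le' (a c : R) : -c <= a <= c -> Rabs a <= c.
Proof. unfold Rabs; destruct Rcase_abs; lra. Qed.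

Lemma exp_bound (a : R) : Rabs a <= 1/2 -> 0 <= exp a - 1 - a <= 2 * a^2.
Proof.
  intros Ha. apply abs_le in Ha.
  pose proof (exp_ineq1_le a). pose proof (exp_ineq1_le (-a)).
  assert (E : exp a * exp (-a) = 1) by (rewrite <- exp_plus; replace (a + - a) with 0 by ring; apply exp_0).
  pose proof (exp_pos a).
  assert (exp a * (1 - a) <= 1).
  { rewrite <- E. apply Rmult_le_compat_l; lra. }
  split; [lra|].
  assert (0 < 1 - a) by lra.
  destruct (Rle_or_lt (exp a - 1 - a - 2*a^2) 0); [lra|]. nra.
Qed.

Lemma sin_abs_le (x : R) : Rabs (sin x) <= Rabs x.
Proof.
  destruct (Rtotal_order x 0) as [H|[H|H]].
  - pose proof (sin_gt_x _ H). pose proof (SIN_bound x). pose proof PI_gt1.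
    rewrite (Rabs_left x) by lra. apply abs_le'.
    destruct (Rle_or_lt (-x) PI).
    + pose proof (sin_ge_0 (-x) ltac:(lra) H3). rewrite sin_neg in H4. lra.
    + lra.
  - rewrite H, sin_0, Rabs_R0; lra.
  - pose proof (sin_lt_x _ H). pose proof (SIN_bound x). pose proof PI_gt1.
    rewrite (Rabs_right x) by lra. apply abs_le'.
    destruct (Rle_or_lt x PI).
    + pose proof (sin_ge_0 x ltac:(lra) H3). lra.
    + lra.
Qed.

Lemma cos_bound1 (b : R) : 0 <= 1 - cos b <= b^2 / 2.
Proof.
  pose proof (COS_bound b).
  split. lra.
  replace b with (2 * (b/2)) at 1 by field.
  rewrite cos_2a_sin.
  pose proof (Rsqr_le_abs_1 _ _ (sin_abs_le (b/2))). unfold Rsqr in H0.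
  nra.
Qed.

Lemma sin_bound1 (b : R) : Rabs b <= 1/2 -> Rabs (sin b - b) <= b^2.
Proof.
  intros Hb.
  assert (Hpos : forall x, 0 <= x <= 1/2 -> x - x^3 <= sin x <= x).
  { intros x Hx. destruct (Req_dec x 0) as [->|Hx0].
    - rewrite sin_0; lra.
    - split.
      + pose proof (sin_bound x 0 ltac:(lra) ltac:(pose proof PI_gt1; lra)) as [H1 _].
        unfold sin_approx, sin_term in H1. simpl in H1. 
        eapply Rle_trans; [|exact H1]. field_simplify. nra.
      + left. apply sin_lt_x. lra. }
  apply abs_le in Hb.
  destruct (Rle_or_lt 0 b).
  - pose proof (Hpos b ltac:(lra)). apply abs_le'. nra.
  - pose proof (Hpos (-b) ltac:(lra)). rewrite sin_neg in H0. apply abs_le'. nra.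
Qed.

Lemma Cmod_le_sum (c : C) : Cmod c <= Rabs (Re c) + Rabs (Im c).
Proof.
  pose proof (Cmod2_alt c). pose proof (Cmod_ge_0 c).
  pose proof (Rabs_pos (Re c)). pose proof (Rabs_pos (Im c)).
  rewrite <- (pow2_abs (Re c)), <- (pow2_abs (Im c)) in H.
  nra.
Qed.

Lemma im_le_Cmod (c : C) : Rabs (Im c) <= Cmod c.
Proof.
  pose proof (Cmod2_alt c). pose proof (Cmod_ge_0 c).
  pose proof (Rabs_pos (Im c)).
  rewrite <- (pow2_abs (Im c)) in H.
  nra.
Qed.

Lemma cexp_add (a b : C) : cexp (a + b) = (cexp a * cexp b)%C.
Proof.
  destruct a as [a1 a2], b as [b1 b2]. unfold cexp. simpl.
  rewrite exp_plus, cos_plus, sin_plus.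
  apply injective_projections; simpl; ring.
Qed.

Lemma Cmod_cexp (z : C) : Cmod (cexp z) = exp (Re z).
Proof.
  destruct z as [a b]. unfold cexp, Cmod, Re, Im. cbn [fst snd].
  replace ((exp a * cos b) ^ 2 + (exp a * sin b) ^ 2) with ((exp a)^2) .
  - apply sqrt_pow2. left; apply exp_pos.
  - pose proof (sin2_cos2 b). unfold Rsqr in H. nra.
Qed.

Lemma cexp_bound (h : C) : Cmod h <= 1/2 -> Cmod (cexp h - 1 - h) <= 4 * Cmod h ^ 2.
Proof.
  intros Hh.
  pose proof (re_le_Cmod h) as Ha. pose proof (im_le_Cmod h) as Hb.
  pose proof (Cmod2_alt h) as Hm.
  destruct h as [a b]. unfold Re, Im in Ha, Hb, Hm. cbn [fst snd] in Ha, Hb, Hm. rewrite Hm. clear Hm.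
  assert (E : (cexp (a, b) - 1 - (a, b))%C = (exp a * cos b - 1 - a, exp a * sin b - b)).
  { unfold cexp. apply injective_projections; simpl; ring. }
  rewrite E. eapply Rle_trans; [apply Cmod_le_sum|]. simpl.
  pose proof (exp_bound a ltac:(lra)) as Ea.
  pose proof (cos_bound1 b) as Cb.
  pose proof (sin_bound1 b ltac:(lra)) as Sb.
  pose proof (sin_abs_le b) as Sb2.
  pose proof (exp_pos a) as Ep.
  apply abs_le in Ha. apply abs_le in Hb.
  assert (Ea2 : exp a <= 2) by nra.
  assert (X : Rabs (exp a * cos b - 1 - a) <= 2 * a^2 + b^2).
  { assert (exp a * (1 - cos b) <= 2 * (b^2/2)).
    { apply Rmult_le_compat; lra. }
    assert (0 <= exp a * (1 - cos b)) by nra.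
    apply abs_le'. split; nra. }
  assert (Y : Rabs (exp a * sin b - b) <= a^2 + 2 * b^2).
  { replace (exp a * sin b - b) with ((exp a - 1) * sin b + (sin b - b)) by ring.
    eapply Rle_trans; [apply Rabs_triang|]. rewrite Rabs_mult.
    assert (Rabs (exp a - 1) <= 2 * Rabs a).
    { apply abs_le'. destruct (Rle_or_lt 0 a).
      - rewrite Rabs_right by lra. nra.
      - rewrite Rabs_left by lra. nra. }
    assert (Rabs (exp a - 1) * Rabs (sin b) <= 2 * Rabs a * Rabs b).
    { apply Rmult_le_compat; auto using Rabs_pos. }
    assert (2 * Rabs a * Rabs b <= a^2 + b^2).
    { rewrite <- (pow2_abs a), <- (pow2_abs b). pose proof (pow2_ge_0 (Rabs a - Rabs b)). lra. }
    lra. }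
  lra.
Qed.

Lemma derive_of_bound (f : C -> C) (x l : C) (r K : R) : 0 < r ->
  (forall y, Cmod (y - x) < r -> Cmod (f y - f x - (y - x) * l) <= K * Cmod (y - x)^2) ->
  @is_derive C_AbsRing C_NormedModule f x l.
Proof.
  intros Hr HK. split.
  - apply (@is_linear_scal_l C_AbsRing C_NormedModule).
  - intros x' Hx'. pose proof (@is_filter_lim_locally_unique C_AbsRing (AbsRing_NormedModule C_AbsRing) x x' Hx') as E; subst x'.
    intros eps.
    apply (@locally_le_locally_norm C_AbsRing (AbsRing_NormedModule C_AbsRing) x).
    assert (Hd : 0 < Rmin r (eps / (Rabs K + 1))).
    { apply Rmin_case; [lra|]. apply Rdiv_lt_0_compat; [apply cond_pos|]. pose proof (Rabs_pos K); lra. }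
    exists (mkposreal _ Hd). intros y Hy. unfold ball_norm in Hy. simpl in Hy.
    change (Cmod (f y - f x - (y - x) * l) <= eps * Cmod (y - x)).
    change (Cmod (y - x) < Rmin r (eps / (Rabs K + 1))) in Hy.
    pose proof (Rmin_l r (eps / (Rabs K + 1))). pose proof (Rmin_r r (eps / (Rabs K + 1))).
    eapply Rle_trans; [apply HK; lra|].
    pose proof (Cmod_ge_0 (y - x)). pose proof (Rle_abs K). pose proof (cond_pos eps).
    assert (Cmod (y - x) * (Rabs K + 1) <= eps).
    { assert (H5 : Cmod (y - x) <= eps / (Rabs K + 1)) by lra.
      apply (Rmult_le_compat_r (Rabs K + 1)) in H5; [|pose proof (Rabs_pos K); lra].
      field_simplify in H5; [lra| pose proof (Rabs_pos K); lra]. }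
    nra.
Qed.

Lemma derive_of_bound' (f : C -> C) (x l : C) (r K : R) : 0 < r ->
  (forall y, Cmod (y - x) < r -> Cmod (f y - f x - (y - x) * l) <= K * Cmod (y - x)^2) ->
  @is_derive C_AbsRing (AbsRing_NormedModule C_AbsRing) f x l.
Proof.
  intros Hr HK. split.
  - apply (@is_linear_scal_l C_AbsRing (AbsRing_NormedModule C_AbsRing)).
  - intros x' Hx'. pose proof (@is_filter_lim_locally_unique C_AbsRing (AbsRing_NormedModule C_AbsRing) x x' Hx') as E; subst x'.
    intros eps.
    apply (@locally_le_locally_norm C_AbsRing (AbsRing_NormedModule C_AbsRing) x).
    assert (Hd : 0 < Rmin r (eps / (Rabs K + 1))).
    { apply Rmin_case; [lra|]. apply Rdiv_lt_0_compat; [apply cond_pos|]. pose proof (Rabs_pos K); lra. }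
    exists (mkposreal _ Hd). intros y Hy. unfold ball_norm in Hy. simpl in Hy.
    change (Cmod (f y - f x - (y - x) * l) <= eps * Cmod (y - x)).
    change (Cmod (y - x) < Rmin r (eps / (Rabs K + 1))) in Hy.
    pose proof (Rmin_l r (eps / (Rabs K + 1))). pose proof (Rmin_r r (eps / (Rabs K + 1))).
    eapply Rle_trans; [apply HK; lra|].
    pose proof (Cmod_ge_0 (y - x)). pose proof (Rle_abs K). pose proof (cond_pos eps).
    assert (Cmod (y - x) * (Rabs K + 1) <= eps).
    { assert (H5 : Cmod (y - x) <= eps / (Rabs K + 1)) by lra.
      apply (Rmult_le_compat_r (Rabs K + 1)) in H5; [|pose proof (Rabs_pos K); lra].
      field_simplify in H5; [lra| pose proof (Rabs_pos K); lra]. }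
    nra.
Qed.

Lemma d_lin (c : R) (z : C) : @is_derive C_AbsRing (AbsRing_NormedModule C_AbsRing) (fun s => (RtoC c * s)%C) z (RtoC c).
Proof.
  apply (derive_of_bound' _ _ _ 1 0); [lra|]. intros y _.
  replace (RtoC c * y - RtoC c * z - (y - z) * RtoC c)%C with (RtoC 0) by ring.
  rewrite Cmod_0. pose proof (Cmod_ge_0 (y - z)). nra.
Qed.

Lemma d_exp (z : C) : @is_derive C_AbsRing C_NormedModule cexp z (cexp z).
Proof.
  apply (derive_of_bound _ _ _ (1/2) (4 * exp (Re z))); [lra|]. intros y Hy.
  replace (cexp y) with (cexp z * cexp (y - z))%C
    by (rewrite <- cexp_add; f_equal; ring).
  replace (cexp z * cexp (y - z) - cexp z - (y - z) * cexp z)%C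
    with (cexp z * (cexp (y - z) - 1 - (y - z)))%C by ring.
  rewrite Cmod_mult, Cmod_cexp.
  pose proof (cexp_bound (y - z) ltac:(lra)). pose proof (exp_pos (Re z)).
  nra.
Qed.

Lemma d_inv (g : C) : g <> RtoC 0 -> @is_derive C_AbsRing C_NormedModule Cinv g (- / (g * g))%C.
Proof.
  intros Hg. assert (Hm : 0 < Cmod g) by (apply Cmod_gt_0; exact Hg).
  apply (derive_of_bound _ _ _ (Cmod g / 2) (2 / (Cmod g)^3)); [lra|]. intros y Hy.
  assert (Hy2 : Cmod g / 2 <= Cmod y).
  { pose proof (Cmod_triangle y (g - y)).
    replace (y + (g - y))%C with g in H by ring.
    replace (g - y)%C with (- (y - g))%C in H by ring. rewrite Cmod_opp in H. lra. }
  assert (Hy0 : y <> RtoC 0).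
  { intros ->. rewrite Cmod_0 in Hy2. lra. }
  replace (/ y - / g - (y - g) * - / (g * g))%C with ((y - g) * (y - g) * / (g * g * y))%C
    by (field; auto).
  rewrite !Cmod_mult, Cmod_inv by (repeat apply Cmult_neq_0; auto).
  rewrite !Cmod_mult.
  pose proof (Cmod_ge_0 (y - g)).
  set (h := Cmod (y - g)) in *. set (m := Cmod g) in *. set (n := Cmod y) in *.
  assert (0 < n) by lra.
  apply (Rmult_le_reg_r (m * m * n)); [apply Rmult_lt_0_compat; nra|].
  field_simplify; [|lra|lra].
  assert (h^2 * m^3 <= 2 * h^2 * m * m * n) by (apply Rmult_le_compat_r with (r := h^2) in Hy2; nra).
  assert (1 <= 2 * n / m).
  { apply (Rmult_le_reg_r m); [lra|]. field_simplify; lra. }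
  replace (2 * h ^ 2 * n / m) with (h^2 * (2 * n / m)) by (field; lra).
  pose proof (pow2_ge_0 h). nra.
Qed.

Lemma d_expc (c : R) (z : C) : @is_derive C_AbsRing (AbsRing_NormedModule C_AbsRing)
  (fun s => cexp (RtoC c * s) - 1)%C z (RtoC c * cexp (RtoC c * z))%C.
Proof.
  pose proof (Rabs_pos c).
  apply (derive_of_bound' _ _ _ (/ (2 * (Rabs c + 1))) (4 * exp (Re (RtoC c * z)) * c^2)).
  { apply Rinv_0_lt_compat; lra. }
  intros y Hy.
  replace (cexp (RtoC c * y)) with (cexp (RtoC c * z) * cexp (RtoC c * (y - z)))%C
    by (rewrite <- cexp_add; f_equal; ring).
  replace (cexp (RtoC c * z) * cexp (RtoC c * (y - z)) - 1 - (cexp (RtoC c * z) - 1) - (y - z) * (RtoC c * cexp (RtoC c * z)))%C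
    with (cexp (RtoC c * z) * (cexp (RtoC c * (y - z)) - 1 - (RtoC c * (y - z))))%C by ring.
  rewrite Cmod_mult, Cmod_cexp.
  assert (Hc : Cmod (RtoC c * (y - z)) = Rabs c * Cmod (y - z)) by (rewrite Cmod_mult, Cmod_R; reflexivity).
  pose proof (Cmod_ge_0 (y - z)).
  assert (Rabs c * Cmod (y - z) <= 1/2).
  { assert (Cmod (y - z) * (2 * (Rabs c + 1)) <= 1).
    { apply (Rmult_lt_compat_r (2 * (Rabs c + 1))) in Hy; [|lra].
      rewrite Rinv_l in Hy; lra. }
    nra. }
  pose proof (cexp_bound (RtoC c * (y - z)) ltac:(lra)). rewrite Hc in H2.
  pose proof (exp_pos (Re (RtoC c * z))).
  replace ((Rabs c * Cmod (y - z))^2) with (c^2 * Cmod (y - z)^2) in H2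
    by (rewrite <- (pow2_abs c); ring).
  nra.
Qed.

Lemma ln2_pos : 0 < ln 2.
Proof. pose proof ln_lt_2; lra. Qed.

Lemma exp_nat (n : nat) (x : R) : exp (INR n * x) = (exp x) ^ n.
Proof.
  induction n.
  - simpl. rewrite Rmult_0_l; apply exp_0.
  - rewrite S_INR. replace ((INR n + 1) * x) with (x + INR n * x) by ring.
    rewrite exp_plus, IHn. simpl. ring.
Qed.

Lemma RtoC_mult (c : R) (x y : R) : (RtoC c * (x, y))%C = (c * x, c * y).
Proof. apply injective_projections; simpl; ring. Qed.

Definition cs_ball (j : nat) : option (Z2 * nat) := Some (fun k => Nat.eqb k j, S j).

Lemma cs_radius : forall j a n, cs_ball j = Some (a, n) -> (1 <= n)%nat.
Proof. unfold cs_ball; intros j a n H; inversion H; lia. Qed.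

Lemma cs_disj : forall i j a m b n, i <> j ->
      cs_ball i = Some (a, m) -> cs_ball j = Some (b, n) ->
      forall x, ~ (ball2 a m x /\ ball2 b n x).
Proof.
  unfold cs_ball, ball2; intros i j a m b n Hij Hi Hj x [H1 H2].
  inversion Hi; inversion Hj; subst.
  destruct (Nat.lt_ge_cases i j).
  - pose proof (H1 i ltac:(lia)). pose proof (H2 i ltac:(lia)).
    rewrite Nat.eqb_refl in H0. rewrite H0 in H3. apply Nat.eqb_neq in Hij. congruence.
  - pose proof (H1 j ltac:(lia)). pose proof (H2 j ltac:(lia)).
    rewrite Nat.eqb_refl in H3. rewrite H3 in H0. 
    assert (j <> i) by lia. apply Nat.eqb_neq in H4. congruence.
Qed.

Definition CS : frac_string2 := {| fs_ball := cs_ball; fs_radius_ge1 := cs_radius; fs_disjoint := cs_disj |}.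

Lemma term_real (s : R) (j : nat) : zeta_term_real CS s j = exp (- ln 2 * s) * (exp (- ln 2 * s)) ^ j.
Proof.
  change (exp (- (INR (S j) * ln 2) * s) = exp (- ln 2 * s) * exp (- ln 2 * s) ^ j).
  replace (- (INR (S j) * ln 2) * s) with (INR (S j) * (- ln 2 * s)) by ring.
  rewrite exp_nat. reflexivity.
Qed.

Lemma CS_abscissa : abscissa CS 0.
Proof.
  pose proof ln2_pos. split.
  - intros sigma Hs.
    assert (Hq : exp (- ln 2 * sigma) < 1).
    { rewrite <- exp_0. apply exp_increasing. nra. }
    pose proof (exp_pos (- ln 2 * sigma)).
    apply (ex_series_ext (fun j => scal (exp (- ln 2 * sigma)) ((exp (- ln 2 * sigma)) ^ j))).
    + intros j. rewrite term_real. reflexivity.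
    + apply (@ex_series_scal_l R_AbsRing R_NormedModule). apply ex_series_geom. rewrite Rabs_right; lra.
  - intros sigma Hs Hex. apply ex_series_lim_0 in Hex.
    assert (Hq : 1 < exp (- ln 2 * sigma)).
    { rewrite <- exp_0. apply exp_increasing. nra. }
    assert (Rbar_le 1 0).
    { apply (is_lim_seq_le (fun _ => 1) (zeta_term_real CS sigma)); [|apply is_lim_seq_const|exact Hex].
      intros n. rewrite term_real. rewrite tech_pow_Rmult. apply pow_R1_Rle. lra. }
    simpl in H0. lra.
Qed.

Definition zf (s : C) : C := Cinv (cexp (RtoC (ln 2) * s) - 1).

Definition Pset (z : C) : Prop := exists n : Z, z = (0, IZR n * (2 * PI / ln 2)).

Lemma holo (z : C) : (cexp (RtoC (ln 2) * z) - 1)%C <> RtoC 0 -> holo_at zf z.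
Proof.
  intros Hne. unfold holo_at.
  pose proof (is_derive_comp Cinv _ z _ _ (d_inv _ Hne) (d_expc (ln 2) z)) as h3.
  eexists. exact h3.
Qed.

Lemma cexp_one_iff (z : C) : cexp (RtoC (ln 2) * z) = RtoC 1 <-> Pset z.
Proof.
  pose proof ln2_pos as L.
  destruct z as [x y]. rewrite RtoC_mult. unfold cexp, Re, Im; cbn [fst snd].
  split.
  - intros E. injection E as E1 E2.
    pose proof (exp_pos (ln 2 * x)).
    assert (S0 : sin (ln 2 * y) = 0) by nra.
    pose proof (sin2_cos2 (ln 2 * y)). rewrite S0 in H0. unfold Rsqr in H0.
    assert (C1 : cos (ln 2 * y) = 1) by nra.
    rewrite C1, Rmult_1_r in E1. rewrite <- exp_0 in E1. apply exp_inv in E1.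
    assert (x = 0) by nra. subst x.
    replace (ln 2 * y) with (2 * (ln 2 * y / 2)) in C1 by field.
    rewrite cos_2a_sin in C1.
    assert (sin (ln 2 * y / 2) = 0) by nra.
    apply sin_eq_0_0 in H1. destruct H1 as [k Hk].
    exists k. f_equal. apply (Rmult_eq_reg_l (ln 2)); [|lra].
    field_simplify; [|lra]. lra.
  - intros [n E]. injection E as E1 E2. subst x y.
    rewrite Rmult_0_r, exp_0, !Rmult_1_l.
    replace (ln 2 * (IZR n * (2 * PI / ln 2))) with (2 * (IZR n * PI)) by (field; lra).
    rewrite cos_2a_sin, sin_2a, (sin_eq_0_1 (IZR n * PI)) by (exists n; reflexivity).
    unfold RtoC. f_equal; ring.
Qed.

Lemma pset_sep (w1 w2 : C) : Pset w1 -> Pset w2 -> w1 <> w2 -> 2 * PI / ln 2 <= Cmod (w1 - w2).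
Proof.
  pose proof ln2_pos. pose proof PI_RGT_0.
  intros [n1 ->] [n2 ->] Hne.
  assert (n1 <> n2) by (intros ->; apply Hne; reflexivity).
  eapply Rle_trans; [|apply im_le_Cmod].
  unfold Im; simpl.
  replace (IZR n1 * (2 * PI / ln 2) + - (IZR n2 * (2 * PI / ln 2))) with
    ((IZR n1 - IZR n2) * (2 * PI / ln 2)) by ring.
  rewrite Rabs_mult, (Rabs_right (2 * PI / ln 2)).
  2:{ apply Rle_ge, Rlt_le, Rdiv_lt_0_compat; lra. }
  rewrite <- minus_IZR, <- abs_IZR.
  assert (1 <= IZR (Z.abs (n1 - n2))) by (apply IZR_le; lia).
  assert (0 < 2 * PI / ln 2) by (apply Rdiv_lt_0_compat; lra).
  nra.
Qed.

Lemma Cmod_sub_sym (a b : C) : Cmod (a - b) = Cmod (b - a).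
Proof. replace (a - b)%C with (- (b - a))%C by ring. apply Cmod_opp. Qed.

Lemma Cmod_tri3 (w w0 z : C) : Cmod (w - w0) <= Cmod (w - z) + Cmod (w0 - z).
Proof.
  replace (w - w0)%C with ((w - z) + (z - w0))%C by ring.
  rewrite (Cmod_sub_sym w0 z). apply Cmod_triangle.
Qed.

Lemma pset_discrete (z : C) : exists delta : R, 0 < delta /\
     forall w : C, Pset w -> 0 < Cmod (w - z) < delta -> False.
Proof.
  pose proof ln2_pos. pose proof PI_RGT_0.
  set (p := 2 * PI / ln 2).
  assert (Hp : 0 < p) by (apply Rdiv_lt_0_compat; lra).
  destruct (Classical_Prop.classic (exists w0, Pset w0 /\ Cmod (w0 - z) < p / 2)) as [[w0 [Pw0 Hw0]]|Hno].
  - destruct (Classical_Prop.classic (w0 = z)) as [->|Hne].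
    + exists (p / 2). split; [lra|]. intros w Pw [H1 H2].
      assert (w <> z) by (intros ->; replace (z - z)%C with (RtoC 0) in H1 by ring; rewrite Cmod_0 in H1; lra).
      pose proof (pset_sep w z Pw Pw0 H3). fold p in H4. lra.
    + exists (Cmod (w0 - z)). split.
      { apply Cmod_gt_0. intros E. apply Hne. 
        replace w0 with ((w0 - z) + z)%C by ring. rewrite E. ring. }
      intros w Pw [H1 H2].
      destruct (Classical_Prop.classic (w = w0)) as [->|Hww]; [lra|].
      pose proof (pset_sep w w0 Pw Pw0 Hww). fold p in H3.
      pose proof (Cmod_tri3 w w0 z). lra.
  - exists (p / 2). split; [lra|]. intros w Pw [H1 H2].
    apply Hno. exists w. split; auto.
Qed.

Lemma pole (p : C) : Pset p -> is_pole zf p.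
Proof.
  intros Pp M. pose proof ln2_pos as L. pose proof (Rabs_pos M) as HM0.
  assert (Hm : 0 < / (2 * (Rabs M + 1))) by (apply Rinv_0_lt_compat; lra).
  set (c := Rmin (1/8) (/ (2 * (Rabs M + 1)))).
  assert (Hc : 0 < c) by (apply Rmin_case; lra).
  pose proof (Rmin_l (1/8) (/ (2 * (Rabs M + 1)))) as Hc1. fold c in Hc1.
  pose proof (Rmin_r (1/8) (/ (2 * (Rabs M + 1)))) as Hc2. fold c in Hc2.
  exists (c / ln 2). split; [apply Rdiv_lt_0_compat; lra|].
  intros z [Hz1 Hz2].
  set (H := (RtoC (ln 2) * (z - p))%C).
  assert (Hu : cexp (RtoC (ln 2) * z) = cexp H).
  { replace (RtoC (ln 2) * z)%C with (RtoC (ln 2) * p + H)%C by (unfold H; ring).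
    rewrite cexp_add. apply cexp_one_iff in Pp. rewrite Pp. ring. }
  unfold zf; rewrite Hu.
  assert (Ht : Cmod H = ln 2 * Cmod (z - p)).
  { unfold H. rewrite Cmod_mult, Cmod_R, Rabs_right; [reflexivity|lra]. }
  set (t := Cmod H) in *.
  assert (Ht1 : 0 < t) by (rewrite Ht; nra).
  assert (Ht2 : t < c).
  { rewrite Ht. apply (Rmult_lt_compat_l (ln 2)) in Hz2; [|lra].
    replace (ln 2 * (c / ln 2)) with c in Hz2 by (field; lra). lra. }
  pose proof (cexp_bound H ltac:(fold t; lra)) as B. fold t in B.
  set (g := (cexp H - 1)%C).
  assert (Lo : t <= Cmod g + Cmod (cexp H - 1 - H)).
  { unfold t. replace H with (g + - (cexp H - 1 - H))%C at 1 by (unfold g; ring).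
    rewrite <- (Cmod_opp (cexp H - 1 - H)). apply Cmod_triangle. }
  assert (Up : Cmod g <= Cmod (cexp H - 1 - H) + t).
  { unfold g, t. replace (cexp H - 1)%C with ((cexp H - 1 - H) + H)%C at 1 by ring.
    apply Cmod_triangle. }
  assert (G1 : t / 2 <= Cmod g) by nra.
  assert (G2 : Cmod g <= 2 * t) by nra.
  assert (Hg : g <> RtoC 0) by (intros E; rewrite E, Cmod_0 in G1; lra).
  rewrite Cmod_inv by exact Hg.
  assert (/ (2 * t) <= / Cmod g) by (apply Rinv_le_contravar; lra).
  assert (Rabs M + 1 < / (2 * t)).
  { rewrite <- (Rinv_inv (Rabs M + 1)). apply Rinv_lt_contravar.
    - apply Rmult_lt_0_compat; [lra | apply Rinv_0_lt_compat; lra].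
    - assert (2 * t < 2 * c) by lra.
      assert (2 * c <= / (Rabs M + 1)).
      { rewrite Rinv_mult in Hc2. lra. }
      lra. }
  pose proof (Rle_abs M). lra.
Qed.

Lemma cpl_S (n : nat) (s : C) : cpow_len (S n) s = (cpow_len n s * cexp (RtoC (- ln 2) * s))%C.
Proof.
  unfold cpow_len. rewrite <- cexp_add. f_equal. destruct s as [x y].
  rewrite !RtoC_mult, S_INR. apply injective_projections; simpl; ring.
Qed.

Lemma cexp_0' : cexp (0, 0) = RtoC 1.
Proof. unfold cexp, Re, Im; cbn [fst snd]. rewrite exp_0, cos_0, sin_0. unfold RtoC. f_equal; ring. Qed.

Lemma cpl_0 (s : C) : cpow_len 0 s = RtoC 1.
Proof.
  unfold cpow_len. destruct s as [x y]. rewrite RtoC_mult.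
  replace (- (INR 0 * ln 2) * x) with 0 by (simpl; ring).
  replace (- (INR 0 * ln 2) * y) with 0 by (simpl; ring).
  apply cexp_0'.
Qed.

Lemma Cmod_cpl (n : nat) (s : C) : Cmod (cpow_len n s) = (exp (- ln 2 * Re s)) ^ n.
Proof.
  unfold cpow_len. rewrite Cmod_cexp. destruct s as [x y]. rewrite RtoC_mult.
  unfold Re; cbn [fst snd]. rewrite <- exp_nat. f_equal. ring.
Qed.

Lemma zeta_series (s : C) : 0 < Re s -> is_series (zeta_term CS s) (zf s).
Proof.
  intros Hs. pose proof ln2_pos as L.
  set (w := cexp (RtoC (- ln 2) * s)).
  set (u := cexp (RtoC (ln 2) * s)).
  assert (Huw : (u * w)%C = RtoC 1).
  { unfold u, w. rewrite <- cexp_add. destruct s as [x y]. rewrite !RtoC_mult.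
    replace (((ln 2 * x)%R, (ln 2 * y)%R) + ((- ln 2 * x)%R, (- ln 2 * y)%R))%C with (0, 0) 
      by (apply injective_projections; simpl; ring).
    apply cexp_0'. }
  set (q := exp (- ln 2 * Re s)).
  assert (Hq : Cmod w = q).
  { unfold w, q. rewrite Cmod_cexp. destruct s as [x y]. rewrite RtoC_mult. reflexivity. }
  assert (Hq0 : 0 < q) by apply exp_pos.
  assert (Hq1 : q < 1) by (unfold q; rewrite <- exp_0; apply exp_increasing; nra).
  assert (H1w : (1 - w)%C <> RtoC 0).
  { intros E. assert (w = RtoC 1).
    { replace w with (RtoC 1 - (1 - w))%C by ring. rewrite E. ring. }
    rewrite H, Cmod_1 in Hq. lra. }
  assert (Hu0 : u <> RtoC 0).
  { intros E. rewrite E, Cmult_0_l in Huw. apply RtoC_inj in Huw. lra. }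
  assert (Hzf : (zf s * (1 - w))%C = w).
  { unfold zf. fold u.
    replace (u - 1)%C with (u * (1 - w))%C.
    2:{ replace (u * (1 - w))%C with (u - u * w)%C by ring. rewrite Huw. ring. }
    assert (Hw : w = (/ u)%C).
    { replace w with (/ u * (u * w))%C by (field; exact Hu0). rewrite Huw. ring. }
    transitivity (/ u)%C; [field; split; assumption | symmetry; exact Hw]. }
  assert (Hpart : forall N, (sum_n (zeta_term CS s) N * (1 - w))%C = (w - cpow_len (S (S N)) s)%C).
  { induction N.
    - rewrite sum_O. change (zeta_term CS s 0) with (cpow_len 1 s).
      rewrite !cpl_S, cpl_0. fold w. ring.
    - rewrite sum_Sn. change (zeta_term CS s (S N)) with (cpow_len (S (S N)) s).
      change (plus (sum_n (zeta_term CS s) N) (cpow_len (S (S N)) s)) with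
        (sum_n (zeta_term CS s) N + cpow_len (S (S N)) s)%C.
      rewrite Cmult_plus_distr_r, IHN. rewrite (cpl_S (S (S N))). fold w. ring. }
  assert (Hcw : 0 < Cmod (1 - w)) by (apply Cmod_gt_0; exact H1w).
  apply (filterlim_locally (F := eventually)). intros eps.
  destruct (pow_lt_1_zero q ltac:(rewrite Rabs_right; lra) (eps * Cmod (1 - w)))
    as [N0 HN0].
  { apply Rmult_lt_0_compat; [apply cond_pos | exact Hcw]. }
  exists N0. intros n Hn.
  apply (@norm_compat1 C_AbsRing C_NormedModule).
  change (Cmod (sum_n (zeta_term CS s) n - zf s) < eps).
  assert (E : (Cmod (sum_n (zeta_term CS s) n - zf s) * Cmod (1 - w)) = q ^ (S (S n))).
  { rewrite <- Cmod_mult.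
    replace ((sum_n (zeta_term CS s) n - zf s) * (1 - w))%C with
      (sum_n (zeta_term CS s) n * (1 - w) - zf s * (1 - w))%C by ring.
    rewrite Hpart, Hzf.
    replace (w - cpow_len (S (S n)) s - w)%C with (- cpow_len (S (S n)) s)%C by ring.
    rewrite Cmod_opp, Cmod_cpl. reflexivity. }
  pose proof (HN0 n Hn). rewrite Rabs_right in H by (apply Rle_ge, pow_le; lra).
  assert (q ^ S (S n) <= q ^ n).
  { simpl. rewrite <- (Rmult_1_l (q ^ n)) at 2. rewrite <- Rmult_assoc.
    apply Rmult_le_compat_r; [apply pow_le; lra| nra]. }
  apply (Rmult_lt_reg_r (Cmod (1 - w))); [exact Hcw|]. lra.
Qed.

Theorem lemma4p1 :
  exists CS2 : frac_string2,
    abscissa CS2 0 /\ oscillatory_period CS2 0 (2 * PI / ln 2).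
Proof.
  exists CS. split; [exact CS_abscissa|].
  pose proof ln2_pos. pose proof PI_RGT_0.
  split; [apply Rdiv_lt_0_compat; lra|].
  exists zf. split.
  - exists 0. intros s Hs. apply zeta_series. exact Hs.
  - split; [|split].
    + exact pset_discrete.
    + intros z Hz. apply holo. intros E. apply Hz. apply cexp_one_iff.
      replace (cexp (RtoC (ln 2) * z)) with ((cexp (RtoC (ln 2) * z) - 1) + 1)%C by ring.
      rewrite E. ring.
    + exact pole.
Qed.
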